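(* Let $\mathbf V=(V,\pi)$ be a persistence module of finite type over $\mathbb Z/2$, and assume that the barcode of $\mathbf V$ contains a bar of the form $(a,b]$ or of the form $(a,\infty)$; in the latter case set $b=\infty$. Then for every $\delta>0$ there exists $x\in V_{a+\delta}$ such that: (i) $\pi_{a+\delta,s}\,x\neq0$ for all $s$ with $a+\delta\le s\le b$; (ii) for all $s$ with $a+\delta\le s\le b$ and all $\sigma\le a$, $\pi_{a+\delta,s}\,x\notin\operatorname{im}\pi_{\sigma,s}$.
   Context: A persistence module $\mathbf V$ consists of finite-dimensional $\mathbb Z/2$-vector spaces $V_t$, $t\in\mathbb R$, and linear maps $\pi_{s,t}:V_s\to V_t$ for $s\le t$ with $\pi_{t,t}=\mathrm{Id}$ and $\pi_{s,t}=\pi_{r,t}\circ\pi_{s,r}$ for $s\le r\le t$. It is of finite type if there is a discrete closed set $\operatorname{spec}(\mathbf V)=\{t_0<t_1<\dots\}$ with $t_0>-\infty$ such that $\pi_{s,t}$ is an isomorphism for $s\le t$ in a neighborhood of any point outside the spectrum, and for $s\le t$ in $(r-\epsilon,r]$ for each spectral point $r$ and some $\epsilon>0$, and $V_t=0$ for $t\le t_0$. For an interval $\mathbb J$ of the form $(a,b]$ or $(a,\infty)$, the interval module $\mathbf Q(\mathbb J)$ has $Q_t=\mathbb Z/2$ for $t\in\mathbb J$, $0$ otherwise, with $\pi_{s,t}=\mathrm{Id}$ for $s,t\in\mathbb J$ and $0$ otherwise. By the structure theorem, a finite-type module is isomorphic to $\bigoplus_j\mathbf Q(\mathbb J_j)$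 for a unique multiset of intervals (each appearing finitely often), its barcode. *)

(* Defs.v *)
From HB Require Import structures.
From mathcomp Require Import all_boot all_order all_algebra.
From mathcomp Require Import reals.
Set Implicit Arguments. Unset Strict Implicit. Unset Printing Implicit Defensive.
Import Order.TTheory GRing.Theory Num.Theory.
Local Open Scope ring_scope.

(* A persistence module over Z/2 indexed by R:
   finite-dimensional 'F_2-spaces V t and linear maps pmor s t
   (the axioms only concern s <= r <= t). *)
Record pmod (R : realType) := PMod {
  V : R -> vectType 'F_2;
  pmor : forall s t : R, 'Hom(V s, V t);
  pi_id : forall t, pmor t t = \1%VF;
  pi_comp : forall s r t, s <= r -> r <= t -> pmor s t = (pmor r t \o pmor s r)%VF
}.

Definition is_iso (U W : vectType 'F_2) (f : 'Hom(U, W)) : Prop :=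
  lker f = 0%VS /\ limg f = fullv.

(* Finite type: a discrete closed (= locally finite) spectrum bounded below
   with least element t0, isomorphisms near non-spectral points and on
   (r - eps, r] for spectral r, and V t = 0 for t <= t0. *)
Definition finite_type (R : realType) (M : pmod R) : Prop :=
  exists S : R -> Prop,
    (forall m : R, exists l : seq R, forall x, S x -> x <= m -> x \in l) /\
    (exists t0, S t0 /\ (forall x, S x -> t0 <= x) /\
                (forall t, t <= t0 -> \dim (fullv : {vspace V M t}) = 0%N)) /\
    (forall r, ~ S r -> exists eps : R, 0 < eps /\
        forall s t, r - eps < s -> s <= t -> t < r + eps -> is_iso (pmor M s t)) /\
    (forall r, S r -> exists eps : R, 0 < eps /\
        forall s t, r - eps < s -> s <= t -> t <= r -> is_iso (pmor M s t)).

(* Intervals (a, b] (b = Some b) or (a, +oo) (b = None). *)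
Definition in_itv (R : realType) (a : R) (b : option R) (t : R) : bool :=
  (a < t) && (if b is Some b' then t <= b' else true).

Definition nonempty_itv (R : realType) (a : R) (b : option R) : bool :=
  if b is Some b' then a < b' else true.

(* An isomorphism from  \bigoplus_{i : I} Q(J i)  onto M, described by the
   images e i t in V t of the generators of the i-th interval summand:
   at each t, the e i t with t in J i form a basis of V t, and the
   structure maps act on them as in the interval modules. *)
Definition barcode_decomposition (R : realType) (M : pmod R) (I : eqType)
    (J : I -> R * option R) (e : forall (i : I) (t : R), V M t) : Prop :=
  (forall i, nonempty_itv (J i).1 (J i).2) /\
  (forall t, exists l : seq I, uniq l /\
      (forall i, i \in l <-> in_itv (J i).1 (J i).2 t) /\
      basis_of fullv [seq e i t | i <- l]) /\
  (forall i s t, in_itv (J i).1 (J i).2 s -> s <= t ->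
      pmor M s t (e i s) = if in_itv (J i).1 (J i).2 t then e i t else 0).

Definition in_barcode (R : realType) (M : pmod R) (a : R) (b : option R) : Prop :=
  exists (I : eqType) (J : I -> R * option R) (e : forall (i : I) (t : R), V M t),
    barcode_decomposition J e /\ exists i0, J i0 = (a, b).

Definition le_ext (R : realType) (s : R) (b : option R) : bool :=
  if b is Some b' then s <= b' else true.

(* Main.v *)
Require Import Defs.
From HB Require Import structures.
From mathcomp Require Import all_boot all_order all_algebra.
From mathcomp Require Import reals.
Import Order.TTheory GRing.Theory Num.Theory.
Local Open Scope ring_scope.

Lemma key_notin (R : realType) (M : pmod R) (I : eqType) (J : I -> R * option R)
  (e : forall (i : I) (t : R), V M t) (t : R) (l : seq I) (i0 : I) :
  uniq l -> i0 \in l -> free [seq e i t | i <- l] ->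
  e i0 t \notin <<[seq e j t | j <- l & j != i0]>>%VS.
Proof.
move=> ul il fr.
have hp : perm_eq [seq e i t | i <- l] [seq e i t | i <- i0 :: rem i0 l].
  by apply: perm_map; apply: perm_to_rem.
rewrite (perm_free hp) /= free_cons rem_filter // in fr.
by case/andP: fr.
Qed.

Theorem lemma3p4 (R : realType) (M : pmod R) (hM : finite_type M)
    (a : R) (b : option R) (hbar : in_barcode M a b)
    (delta : R) (hdelta : 0 < delta) :
  exists x : V M (a + delta),
    (forall s : R, a + delta <= s -> le_ext s b -> pmor M (a + delta) s x != 0) /\
    (forall s sigma : R, a + delta <= s -> le_ext s b -> sigma <= a ->
        pmor M (a + delta) s x \notin limg (pmor M sigma s)).
Proof.
case: hbar => I [J [e [[hne [hbas hmor]] [i0 hi0]]]].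
exists (e i0 (a + delta)).
have ad : a < a + delta by rewrite ltrDl.
have hin : forall s, a + delta <= s -> le_ext s b -> Defs.in_itv (J i0).1 (J i0).2 s.
  move=> s hs hb; rewrite hi0 /Defs.in_itv /=.
  rewrite (lt_le_trans ad hs) /=; by case: b hi0 hb.
have himg : forall s, a + delta <= s -> le_ext s b -> pmor M (a + delta) s (e i0 (a + delta)) = e i0 s.
  move=> s hs hb; have h0 : le_ext (a + delta) b by move: hb; case: b {hin hi0} => //= b'; exact: le_trans hs.
  by rewrite hmor ?hin //; apply: hin (lexx _) h0.
have hnot : forall s, a + delta <= s -> le_ext s b ->
   exists l : seq I, (forall i, i \in l <-> Defs.in_itv (J i).1 (J i).2 s) /\
     e i0 s \notin <<[seq e j s | j <- l & j != i0]>>%VS.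
  move=> s hs hb; case: (hbas s) => l [ul [ml bl]]; exists l; split => //.
  apply: key_notin => //; first by apply/ml; apply: hin.
  by case/andP: bl.
split.
  move=> s hs hb; rewrite himg //; case: (hnot s hs hb) => l [_ hn].
  by apply: contra hn => /eqP ->; apply: mem0v.
move=> s sigma hs hb hsig; rewrite himg //.
case: (hnot s hs hb) => l [ml hn]; apply: contra hn => hx.
case: (hbas sigma) => ls [uls [mls bls]].
have hsub : (limg (pmor M sigma s) <= <<[seq e j s | j <- l & j != i0]>>)%VS.
  case/andP: bls => /eqP hsp _.
  rewrite -hsp limg_span; apply/span_subvP => v /mapP [w /mapP [j jl ->] ->].
  have jin := (iffLR (mls j) jl).
  rewrite hmor //; last by apply: le_trans hsig (le_trans (ltW ad) hs).
  case: ifP => hjs; last exact: mem0v.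
  apply: memv_span; apply: map_f; rewrite mem_filter; apply/andP; split.
    apply/eqP => ej; move: jin; rewrite ej hi0 /Defs.in_itv /= => /andP [h _].
    by move: (lt_le_trans h hsig); rewrite ltxx.
  by apply/ml.
exact: (subvP hsub _ hx).
Qed.
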